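(* Let $\beta=1$, $\gamma>2$ and $G\in\mathcal S_{Rob}(\mathbb R^* )$. Then $$\lim_{n\to\infty}\Big\{G_+'(0)\sum_{x=0}^{\infty}G(\tfrac xn)\sum_{r=x+1}^{\infty}r\,p(r)+G_-'(0)\sum_{x=-\infty}^{-1}G(\tfrac xn)\sum_{r=-\infty}^{x}r\,p(r)\Big\}=\frac{\kappa_\gamma}{\hat\alpha}[\nabla_{\beta,\gamma}G(0)]^2,$$ where $\nabla_{\beta,\gamma}G(0)=G_+'(0)$.
   Context: Fix $\gamma>2$ and $\alpha>0$. Let $p(0)=0$, $p(x)=c_\gamma|x|^{-\gamma-1}$ ($x\ne0$), with $c_\gamma$ the constant making $\sum_xp(x)=1$. Let $m=\sum_{x\ge1}xp(x)$, $\sigma^2=\sum_xx^2p(x)$, $\kappa_\gamma=\sigma^2/2$, $\hat\alpha=\alpha m/\kappa_\gamma=2\alpha m/\sigma^2$. $\mathcal S_{Rob}(\mathbb R^* )$ is the space of functions $G=\mathbb 1_{\{u<0\}}G_-+\mathbb 1_{\{u\ge0\}}G_+$ with $G_\pm$ Schwartz functions satisfying $G_-^{(2k+1)}(0)=G_+^{(2k+1)}(0)=\hat\alpha[G_+^{(2k)}(0)-G_-^{(2k)}(0)]$ for all $k\ge0$; $\nabla_{\beta,\gamma}G$ is the piecewise first derivative ($G_-'$ on $(-\infty,0)$, $G_+'$ on $[0,\infty)$). *)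

(* Defs.v *)
From Stdlib Require Import Reals ZArith.
From Coquelicot Require Import Coquelicot.
Open Scope R_scope.

Definition pw (gamma : R) (x : Z) : R :=
  if Z.eq_dec x 0 then 0 else Rpower (IZR (Z.abs x)) (- gamma - 1).

(* c_gamma : normalizes sum_{x in Z} p(x) = 1; the sum over Z is split into
   x >= 1 and x <= -1 (p(0) = 0). *)
Definition c_gamma (gamma : R) : R :=
  / (Series (fun k : nat => pw gamma (Z.of_nat k + 1)%Z)
     + Series (fun k : nat => pw gamma (- (Z.of_nat k + 1))%Z)).

Definition p (gamma : R) (x : Z) : R := c_gamma gamma * pw gamma x.

Definition m_mean (gamma : R) : R :=
  Series (fun k : nat => IZR (Z.of_nat k + 1) * p gamma (Z.of_nat k + 1)%Z).

Definition sigma2 (gamma : R) : R :=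
  Series (fun k : nat => (IZR (Z.of_nat k + 1))^2 * p gamma (Z.of_nat k + 1)%Z)
  + Series (fun k : nat => (IZR (- (Z.of_nat k + 1)))^2 * p gamma (- (Z.of_nat k + 1))%Z).

Definition kappa (gamma : R) : R := sigma2 gamma / 2.

Definition alpha_hat (alpha gamma : R) : R := alpha * m_mean gamma / kappa gamma.

Definition schwartz (f : R -> R) : Prop :=
  (forall (k : nat) (x : R), ex_derive_n f k x) /\
  (forall (k j : nat), exists C : R, forall x : R,
      Rabs (x ^ j * Derive_n f k x) <= C).

Definition glue (Gm Gp : R -> R) (u : R) : R :=
  if Rlt_dec u 0 then Gm u else Gp u.

(* G in S_Rob(R^star), given by its pieces G_-, G_+ *)
Definition S_Rob (ahat : R) (Gm Gp : R -> R) : Prop :=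
  schwartz Gm /\ schwartz Gp /\
  forall k : nat,
    Derive_n Gm (2 * k + 1) 0 = ahat * (Derive_n Gp (2 * k) 0 - Derive_n Gm (2 * k) 0) /\
    Derive_n Gp (2 * k + 1) 0 = ahat * (Derive_n Gp (2 * k) 0 - Derive_n Gm (2 * k) 0).

(* Main.v *)
Require Import Defs.
From Stdlib Require Import Reals ZArith Lra Lia.
From Coquelicot Require Import Coquelicot.
Open Scope R_scope.
From Stdlib Require Import Lra Lia.

Lemma ex_series_bounded (a : nat -> R) (M : R) :
  (forall n, 0 <= a n) -> (forall N, sum_n a N <= M) -> ex_series a.
Proof.
  intros Ha HM.
  destruct (ex_finite_lim_seq_incr (sum_n a) M) as [l Hl].
  - intros n. rewrite sum_Sn. unfold plus; simpl. specialize (Ha (S n)). lra.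
  - exact HM.
  - exists l. exact Hl.
Qed.

Lemma Rpower_neg_le (a b c : R) : 0 <= c -> 0 < a <= b -> Rpower b (-c) <= Rpower a (-c).
Proof.
  intros Hc Hab. rewrite !Rpower_Ropp. apply Rinv_le_contravar.
  - apply exp_pos.
  - apply Rle_Rpower_l; lra.
Qed.

Lemma pseries (s : R) : 1 < s -> ex_series (fun k => Rpower (INR k + 1) (-s)).
Proof.
  intros Hs.
  apply ex_series_incr_1.
  set (u := fun k : nat => Rpower (INR k + 1) (1 - s)).
  assert (Hu : forall k, 0 <= u k) by (intros k; unfold u, Rpower; left; apply exp_pos).
  assert (Ht : forall k, Rpower (INR (S k) + 1) (-s) <= (u k - u (S k)) / (s - 1)).
  { intros k.
    assert (Hk := pos_INR k).
    destruct (MVT_gen (fun x => Rpower x (1 - s)) (INR k + 1) (INR k + 2)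
                (fun x => (1 - s) * Rpower x (1 - s - 1))) as [c [Hc Heq]].
    - intros x Hx. rewrite Rmin_left in Hx by lra. rewrite Rmax_right in Hx by lra.
      apply is_derive_Reals. apply derivable_pt_lim_power. lra.
    - intros x Hx. rewrite Rmin_left in Hx by lra. rewrite Rmax_right in Hx by lra.
      apply derivable_continuous_pt. exists ((1 - s) * Rpower x (1 - s - 1)).
      apply derivable_pt_lim_power. lra.
    - rewrite Rmin_left in Hc by lra. rewrite Rmax_right in Hc by lra.
      unfold u. rewrite S_INR.
      replace (INR k + 1 + 1) with (INR k + 2) by ring.
      replace (1 - s - 1) with (-s) in Heq by ring.
      assert (H1 : Rpower (INR k + 2) (-s) <= Rpower c (-s)).
      { apply Rpower_neg_le; lra. }
      apply Rmult_le_reg_r with (s - 1). lra.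
      unfold Rdiv. rewrite Rmult_assoc, Rinv_l by lra. rewrite Rmult_1_r.
      replace (Rpower (INR k + 1) (1 - s) - Rpower (INR k + 2) (1 - s))
        with (- (Rpower (INR k + 2) (1 - s) - Rpower (INR k + 1) (1 - s))) by ring.
      rewrite Heq. nra. }
  apply ex_series_bounded with (u 0%nat / (s - 1)).
  - intros n. left. apply exp_pos.
  - intros N. rewrite sum_n_Reals.
    assert (forall N, sum_f_R0 (fun k => Rpower (INR (S k) + 1) (-s)) N <= (u 0%nat - u (S N)) / (s - 1)).
    { induction N0.
      - exact (Ht 0%nat).
      - change (sum_f_R0 (fun k => Rpower (INR (S k) + 1) (-s)) (S N0)) with (sum_f_R0 (fun k => Rpower (INR (S k) + 1) (-s)) N0 + Rpower (INR (S (S N0)) + 1) (-s)). specialize (Ht (S N0)).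
        apply Rle_trans with ((u 0%nat - u (S N0)) / (s - 1) + (u (S N0) - u (S (S N0))) / (s - 1)).
        + lra.
        + right. field. lra. }
    apply Rle_trans with ((u 0%nat - u (S N)) / (s - 1)). apply H.
    unfold Rdiv. apply Rmult_le_compat_r. left; apply Rinv_0_lt_compat; lra.
    specialize (Hu (S N)); lra.
Qed.

Lemma Series_nonneg (a : nat -> R) : (forall n, 0 <= a n) -> ex_series a -> 0 <= Series a.
Proof.
  intros Ha Hex.
  replace 0 with (Series (fun _ : nat => 0 * 0)).
  - apply Series_le; [intros n; rewrite Rmult_0_l; split; [lra | apply Ha] | exact Hex].
  - rewrite Series_scal_l; ring.
Qed.

Lemma eventually_forall_le (P : nat -> nat -> Prop) (N : nat) :
  (forall k, eventually (P k)) -> eventually (fun n => forall k, (k <= N)%nat -> P k n).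
Proof.
  intros H. induction N.
  - eapply filter_imp; [|apply (H 0%nat)]. intros n Hn k Hk.
    replace k with 0%nat by lia. exact Hn.
  - eapply filter_imp; [|apply filter_and; [exact IHN | apply (H (S N))]].
    intros n [H1 H2] k Hk. destruct (Nat.eq_dec k (S N)) as [->|Hne]. exact H2.
    apply H1. lia.
Qed.

Lemma tail_eq (a : nat -> R) (N : nat) : ex_series a ->
  Series a = sum_f_R0 a N + Series (fun j => a (S N + j)%nat).
Proof. intros H. rewrite (Series_incr_n a (S N)) by (lia || exact H). reflexivity. Qed.

Lemma dom_series (g : nat -> nat -> R) (a : nat -> R) (A L C : R) :
  (forall k, 0 <= a k) -> is_series a A -> (forall n k, Rabs (g n k) <= C) ->
  (forall k, is_lim_seq (fun n => g n k) L) ->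
  is_lim_seq (fun n => Series (fun k => g n k * a k)) (L * A).
Proof.
  intros Ha HA Hg Hlim.
  assert (Hexa : ex_series a) by (exists A; exact HA).
  assert (HSA : Series a = A) by (apply is_series_unique; exact HA).
  set (D := C + Rabs L).
  assert (HC : 0 <= C) by (apply Rle_trans with (Rabs (g 0%nat 0%nat)); [apply Rabs_pos | apply Hg]).
  assert (HD : 0 <= D) by (unfold D; assert (0 <= Rabs L) by apply Rabs_pos; lra).
  assert (Hbd : forall n k, Rabs ((g n k - L) * a k) <= D * a k).
  { intros n k. rewrite Rabs_mult, (Rabs_pos_eq (a k)) by apply Ha.
    apply Rmult_le_compat_r; [apply Ha|].
    unfold Rminus. eapply Rle_trans; [apply Rabs_triang|]. rewrite Rabs_Ropp.
    unfold D; specialize (Hg n k); lra. }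
  assert (HexDa : ex_series (fun k => D * a k)).
  { apply (ex_series_scal_l D a) in Hexa. exact Hexa. }
  assert (Hexh : forall n, ex_series (fun k => Rabs ((g n k - L) * a k))).
  { intros n. apply (@ex_series_le R_AbsRing R_CompleteNormedModule _ (fun k => D * a k)); [|exact HexDa].
    intros k. unfold norm; simpl. unfold abs; simpl. rewrite Rabs_Rabsolu. apply Hbd. }
  assert (Heq : forall n, Series (fun k => g n k * a k) = Series (fun k => (g n k - L) * a k) + L * A).
  { intros n. rewrite <- HSA, <- Series_scal_l, <- Series_plus.
    - apply Series_ext. intros k. ring.
    - apply ex_series_Rabs. apply Hexh.
    - apply (ex_series_scal_l L a) in Hexa. exact Hexa. }
  apply is_lim_seq_ext with (fun n => Series (fun k => (g n k - L) * a k) + L * A).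
  { intros n. symmetry. apply Heq. }
  replace (Finite (L * A)) with (Rbar_plus (Finite 0) (Finite (L * A))) by (simpl; f_equal; ring).
  apply is_lim_seq_plus'; [|apply is_lim_seq_const].
  apply is_lim_seq_spec. intros eps. simpl.
  assert (Htail : is_lim_seq (fun N => Series (fun j => a (S N + j)%nat)) 0).
  { apply is_lim_seq_ext with (fun N => A - sum_f_R0 a N).
    { intros N. rewrite <- HSA, (tail_eq a N Hexa). ring. }
    replace (Finite 0) with (Rbar_minus (Finite A) (Finite A)) by (simpl; f_equal; ring).
    apply is_lim_seq_minus'; [apply is_lim_seq_const|].
    apply is_lim_seq_ext with (sum_n a). intros N; apply sum_n_Reals.
    exact HA. }
  apply is_lim_seq_spec in Htail.
  assert (He1 : 0 < eps / (2 * (D + 1))) by (apply Rdiv_lt_0_compat; [apply cond_pos | lra]).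
  destruct (Htail (mkposreal _ He1)) as [N HN]. specialize (HN N (le_n N)). simpl in HN.
  rewrite Rminus_0_r in HN.
  assert (HA0 : 0 <= A) by (rewrite <- HSA; apply Series_nonneg; assumption).
  assert (Hd : 0 < eps / (2 * (A + 1))) by (apply Rdiv_lt_0_compat; [apply cond_pos | lra]).
  assert (Hev := eventually_forall_le (fun k n => Rabs (g n k - L) < eps / (2 * (A + 1))) N
                  (fun k => proj2 (is_lim_seq_spec _ _) (Hlim k) (mkposreal _ Hd))).
  eapply filter_imp; [|exact Hev]. intros n Hn. simpl in Hn.
  rewrite Rminus_0_r.
  eapply Rle_lt_trans; [apply Series_Rabs; apply Hexh|].
  cbv beta. rewrite (tail_eq (fun k => Rabs ((g n k - L) * a k)) N (Hexh n)).
  assert (Hsum : sum_f_R0 (fun k => Rabs ((g n k - L) * a k)) N <= eps / (2 * (A + 1)) * A).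
  { eapply Rle_trans.
    - apply sum_Rle with (Bn := fun k => a k * (eps / (2 * (A + 1)))).
      intros k Hk. rewrite Rabs_mult, (Rabs_pos_eq (a k)) by apply Ha. rewrite (Rmult_comm (a k)).
      apply Rmult_le_compat_r; [apply Ha|]. left; apply Hn; exact Hk.
    - rewrite <- scal_sum. apply Rmult_le_compat_l; [lra|].
      rewrite <- HSA, (tail_eq a N Hexa).
      assert (0 <= Series (fun j => a (S N + j)%nat)).
      { apply Series_nonneg. intros; apply Ha. apply (ex_series_incr_n a (S N)). exact Hexa. }
      lra. }
  assert (Htl : Series (fun j => Rabs ((g n (S N + j)%nat - L) * a (S N + j)%nat))
                <= D * Series (fun j => a (S N + j)%nat)).
  { rewrite <- Series_scal_l. apply Series_le.
    - intros j. split; [apply Rabs_pos | apply Hbd].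
    - apply (ex_series_incr_n (fun k => D * a k) (S N)). exact HexDa. }
  assert (Hx1 : eps / (2 * (A + 1)) * A < eps / 2).
  { apply Rmult_lt_reg_r with (2 * (A + 1)). lra.
    replace (eps / (2 * (A + 1)) * A * (2 * (A + 1))) with (eps * A) by (field; lra).
    replace (eps / 2 * (2 * (A + 1))) with (eps * A + eps) by field.
    assert (Hp := cond_pos eps). lra. }
  assert (Hx2 : D * Series (fun j => a (S N + j)%nat) <= eps / 2).
  { assert (0 <= Series (fun j => a (S N + j)%nat)).
    { apply Series_nonneg. intros; apply Ha. apply (ex_series_incr_n a (S N)). exact Hexa. }
    apply Rle_trans with ((D + 1) * Series (fun j => a (S N + j)%nat)). nra.
    apply Rle_trans with ((D + 1) * (eps / (2 * (D + 1)))).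
    apply Rmult_le_compat_l; [lra|]. rewrite Rabs_pos_eq in HN by assumption. left; exact HN.
    right. field. lra. }
  lra.
Qed.

Lemma Series_ge_first (a : nat -> R) : (forall n, 0 <= a n) -> ex_series a -> a 0%nat <= Series a.
Proof.
  intros Ha Hex. rewrite Series_incr_1 by exact Hex.
  assert (0 <= Series (fun k => a (S k))).
  { apply Series_nonneg. intros; apply Ha. apply (proj1 (ex_series_incr_1 a)). exact Hex. }
  lra.
Qed.

Lemma IZR_succ (k : nat) : IZR (Z.of_nat k + 1) = INR k + 1.
Proof. rewrite plus_IZR, <- INR_IZR_INZ. reflexivity. Qed.

Definition w (gamma : R) (k : nat) : R := Rpower (INR k + 1) (- gamma - 1).

Lemma pw_pos (gamma : R) (k : nat) : pw gamma (Z.of_nat k + 1) = w gamma k.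
Proof.
  unfold pw, w. destruct (Z.eq_dec (Z.of_nat k + 1) 0) as [H|H]; [lia|].
  rewrite Z.abs_eq by lia. rewrite IZR_succ. reflexivity.
Qed.

Lemma pw_opp (gamma : R) (z : Z) : pw gamma (- z) = pw gamma z.
Proof.
  unfold pw. destruct (Z.eq_dec (- z) 0); destruct (Z.eq_dec z 0); try lia; auto.
  rewrite Z.abs_opp. reflexivity.
Qed.

Lemma p_opp (gamma : R) (z : Z) : p gamma (- z) = p gamma z.
Proof. unfold p. rewrite pw_opp. reflexivity. Qed.

Definition b (gamma : R) (k : nat) : R := IZR (Z.of_nat k + 1) * p gamma (Z.of_nat k + 1).
Definition a (gamma : R) (k : nat) : R := Series (fun j => b gamma (k + j)).
Definition Bt (gamma : R) (k : nat) : R := IZR (Z.of_nat k + 1) * b gamma k.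

Lemma c_gamma_eq (gamma : R) : c_gamma gamma = / (2 * Series (w gamma)).
Proof.
  unfold c_gamma. f_equal.
  rewrite (Series_ext (fun k => pw gamma (Z.of_nat k + 1)) (w gamma)) by apply pw_pos.
  rewrite (Series_ext (fun k => pw gamma (- (Z.of_nat k + 1))) (w gamma)).
  ring. intros k. rewrite pw_opp. apply pw_pos.
Qed.

Section Main.
Variable gamma : R.
Hypothesis Hg : 2 < gamma.

Lemma w_pos k : 0 < w gamma k.
Proof. unfold w, Rpower. apply exp_pos. Qed.

Lemma ex_w : ex_series (w gamma).
Proof. unfold w. replace (- gamma - 1) with (- (gamma + 1)) by ring. apply pseries. lra. Qed.

Lemma c_pos : 0 < c_gamma gamma.
Proof.
  rewrite c_gamma_eq. apply Rinv_0_lt_compat.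
  assert (H := Series_ge_first (w gamma) (fun n => Rlt_le _ _ (w_pos n)) ex_w).
  assert (H0 := w_pos 0). lra.
Qed.

Lemma b_eq k : b gamma k = (INR k + 1) * (c_gamma gamma * w gamma k).
Proof. unfold b, p. rewrite pw_pos, IZR_succ. reflexivity. Qed.

Lemma b_pos k : 0 < b gamma k.
Proof.
  rewrite b_eq. assert (H := pos_INR k). assert (H1 := c_pos). assert (H2 := w_pos k).
  apply Rmult_lt_0_compat. lra. apply Rmult_lt_0_compat; lra.
Qed.

Lemma ex_Bt : ex_series (Bt gamma).
Proof.
  assert (E : forall k, c_gamma gamma * Rpower (INR k + 1) (- (gamma - 1)) = Bt gamma k).
  { intros k. unfold Bt. rewrite b_eq, IZR_succ. unfold w.
    assert (Hk := pos_INR k).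
    replace (- (gamma - 1)) with (1 + (1 + (- gamma - 1))) by ring.
    rewrite !Rpower_plus, Rpower_1 by lra. ring. }
  apply (ex_series_ext _ _ E).
  apply (ex_series_scal_l (c_gamma gamma) (fun k => Rpower (INR k + 1) (- (gamma - 1)))).
  apply pseries. lra.
Qed.

Lemma ex_b : ex_series (b gamma).
Proof.
  apply (@ex_series_le R_AbsRing R_CompleteNormedModule _ (Bt gamma)); [|exact ex_Bt].
  intros k. unfold norm; simpl. unfold abs; simpl. unfold Bt. rewrite IZR_succ.
  assert (H := b_pos k). assert (Hk := pos_INR k).
  rewrite Rabs_pos_eq by lra. nra.
Qed.

Lemma ex_b_shift k : ex_series (fun j => b gamma (k + j)).
Proof. apply (ex_series_incr_n (b gamma) k). exact ex_b. Qed.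

Lemma a_rec k : a gamma k = b gamma k + a gamma (S k).
Proof.
  unfold a. rewrite Series_incr_1 by apply ex_b_shift.
  rewrite Nat.add_0_r. f_equal. apply Series_ext. intros j. f_equal. lia.
Qed.

Lemma a_nonneg k : 0 <= a gamma k.
Proof. apply Series_nonneg. intros; left; apply b_pos. apply ex_b_shift. Qed.

Lemma a_sum N : sum_f_R0 (a gamma) N = sum_f_R0 (Bt gamma) N + (INR N + 1) * a gamma (S N).
Proof.
  induction N.
  - simpl. rewrite a_rec. unfold Bt. simpl. field.
  - change (sum_f_R0 (a gamma) (S N)) with (sum_f_R0 (a gamma) N + a gamma (S N)).
    change (sum_f_R0 (Bt gamma) (S N)) with (sum_f_R0 (Bt gamma) N + Bt gamma (S N)).
    rewrite IHN. rewrite (a_rec (S N)). unfold Bt. rewrite IZR_succ, !S_INR. ring.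
Qed.

Lemma a_series : is_series (a gamma) (Series (Bt gamma)).
Proof.
  apply is_series_Reals. apply is_lim_seq_Reals.
  apply is_lim_seq_le_le with (sum_f_R0 (Bt gamma)) (fun _ => Series (Bt gamma)).
  - intros N. rewrite a_sum. split.
    + assert (H := a_nonneg (S N)). assert (H1 := pos_INR N). nra.
    + rewrite (tail_eq (Bt gamma) N ex_Bt). apply Rplus_le_compat_l.
      unfold a. rewrite <- Series_scal_l. apply Series_le.
      * intros j. assert (H := b_pos (S N + j)). assert (H1 := pos_INR N). split. nra.
        unfold Bt. rewrite IZR_succ, plus_INR, S_INR. assert (H2 := pos_INR j). nra.
      * apply (ex_series_incr_n (Bt gamma) (S N)). exact ex_Bt.
  - apply is_lim_seq_Reals. apply is_series_Reals. apply Series_correct. exact ex_Bt.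
  - apply is_lim_seq_const.
Qed.

End Main.

Lemma lim_div (x : R) : is_lim_seq (fun n => x / INR n) 0.
Proof.
  assert (H : is_lim_seq (fun n => / INR n) 0).
  { replace (Finite 0) with (Rbar_inv p_infty) by reflexivity.
    apply is_lim_seq_inv. apply is_lim_seq_INR. discriminate. }
  replace (Finite 0) with (Finite (x * 0)) by (f_equal; ring).
  apply is_lim_seq_mult'; [apply is_lim_seq_const | exact H].
Qed.

Theorem lemmaA4 (alpha gamma : R) (Gm Gp : R -> R) :
  2 < gamma -> 0 < alpha ->
  S_Rob (alpha_hat alpha gamma) Gm Gp ->
  is_lim_seq
    (fun n : nat =>
       Derive Gp 0 *
         Series (fun k : nat =>
           glue Gm Gp (INR k / INR n) *
           Series (fun j : nat =>
             IZR (Z.of_nat k + 1 + Z.of_nat j) * p gamma (Z.of_nat k + 1 + Z.of_nat j)%Z))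
       + Derive Gm 0 *
         Series (fun k : nat =>
           glue Gm Gp (IZR (- (Z.of_nat k + 1)) / INR n) *
           Series (fun j : nat =>
             IZR (- (Z.of_nat k + 1) - Z.of_nat j)
               * p gamma (- (Z.of_nat k + 1) - Z.of_nat j)%Z)))
    (kappa gamma / alpha_hat alpha gamma * (Derive Gp 0) ^ 2).
Proof.
  intros Hg Halpha [Sm [Sp Rob]].
  destruct (Rob 0%nat) as [R1 R2].
  change (Derive Gm 0 = alpha_hat alpha gamma * (Gp 0 - Gm 0)) in R1.
  change (Derive Gp 0 = alpha_hat alpha gamma * (Gp 0 - Gm 0)) in R2.
  destruct (proj2 Sm 0%nat 0%nat) as [Cm HCm].
  destruct (proj2 Sp 0%nat 0%nat) as [Cp HCp].
  assert (HBm : forall x, Rabs (Gm x) <= Cm).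
  { intros x; specialize (HCm x); simpl in HCm; rewrite Rmult_1_l in HCm; exact HCm. }
  assert (HBp : forall x, Rabs (Gp x) <= Cp).
  { intros x; specialize (HCp x); simpl in HCp; rewrite Rmult_1_l in HCp; exact HCp. }
  assert (HBg : forall x, Rabs (glue Gm Gp x) <= Rmax Cm Cp).
  { intros x. unfold glue. destruct (Rlt_dec x 0).
    - eapply Rle_trans; [apply HBm | apply Rmax_l].
    - eapply Rle_trans; [apply HBp | apply Rmax_r]. }
  assert (CGp : continuity_pt Gp 0).
  { apply derivable_continuous_pt; apply ex_derive_Reals_0; exact (proj1 Sp 1%nat 0). }
  assert (CGm : continuity_pt Gm 0).
  { apply derivable_continuous_pt; apply ex_derive_Reals_0; exact (proj1 Sm 1%nat 0). }
  set (A := Series (Bt gamma)).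
  assert (HaA := a_series gamma Hg). fold A in HaA.
  assert (Hpos : forall k, 0 <= a gamma k) by (intros; apply a_nonneg; exact Hg).
  assert (L1 : is_lim_seq (fun n => Series (fun k => glue Gm Gp (INR k / INR n) * a gamma k)) (Gp 0 * A)).
  { apply dom_series with (Rmax Cm Cp); try assumption.
    - intros n k; apply HBg.
    - intros k. apply is_lim_seq_ext_loc with (fun n => Gp (INR k / INR n)).
      + exists 1%nat. intros n Hn. unfold glue. destruct (Rlt_dec (INR k / INR n) 0) as [Hl|Hl]; [exfalso|reflexivity].
        assert (0 < INR n) by (apply lt_0_INR; lia).
        assert (0 <= INR k / INR n) by (apply Rmult_le_pos; [apply pos_INR| left; apply Rinv_0_lt_compat; lra]).
        lra.
      + apply is_lim_seq_continuous; [exact CGp | apply lim_div]. }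
  assert (L2 : is_lim_seq (fun n => Series (fun k => glue Gm Gp (IZR (- (Z.of_nat k + 1)) / INR n) * a gamma k)) (Gm 0 * A)).
  { apply dom_series with (Rmax Cm Cp); try assumption.
    - intros n k; apply HBg.
    - intros k. apply is_lim_seq_ext_loc with (fun n => Gm (IZR (- (Z.of_nat k + 1)) / INR n)).
      + exists 1%nat. intros n Hn. unfold glue.
        assert (0 < INR n) by (apply lt_0_INR; lia).
        assert (Hlt : IZR (- (Z.of_nat k + 1)) / INR n < 0).
        { rewrite opp_IZR, IZR_succ. unfold Rdiv.
          assert (0 < / INR n) by (apply Rinv_0_lt_compat; lra).
          assert (Hk := pos_INR k). nra. }
        destruct (Rlt_dec (IZR (- (Z.of_nat k + 1)) / INR n) 0) as [Hl|Hl]; [reflexivity|contradiction].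
      + apply is_lim_seq_continuous; [exact CGm | apply lim_div]. }
  assert (Ein1 : forall k, Series (fun j : nat =>
             IZR (Z.of_nat k + 1 + Z.of_nat j) * p gamma (Z.of_nat k + 1 + Z.of_nat j)%Z) = a gamma k).
  { intros k. unfold a. apply Series_ext. intros j. unfold b.
    replace (Z.of_nat k + 1 + Z.of_nat j)%Z with (Z.of_nat (k + j) + 1)%Z by lia. reflexivity. }
  assert (Ein2 : forall k, Series (fun j : nat =>
             IZR (- (Z.of_nat k + 1) - Z.of_nat j)
               * p gamma (- (Z.of_nat k + 1) - Z.of_nat j)%Z) = - a gamma k).
  { intros k. unfold a. rewrite <- Series_opp. apply Series_ext. intros j. unfold b.
    replace (- (Z.of_nat k + 1) - Z.of_nat j)%Z with (- (Z.of_nat (k + j) + 1))%Z by lia.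
    rewrite opp_IZR, p_opp. ring. }
  assert (HkA : kappa gamma = A).
  { unfold kappa, sigma2.
    rewrite (Series_ext (fun k => IZR (Z.of_nat k + 1) ^ 2 * p gamma (Z.of_nat k + 1)%Z) (Bt gamma))
      by (intros k; unfold Bt, b; ring).
    rewrite (Series_ext (fun k => IZR (- (Z.of_nat k + 1)) ^ 2 * p gamma (- (Z.of_nat k + 1))%Z) (Bt gamma))
      by (intros k; unfold Bt, b; rewrite opp_IZR, p_opp; ring).
    fold A. field. }
  assert (HApos : 0 < A).
  { unfold A. assert (H := Series_ge_first (Bt gamma)).
    assert (HB : forall n, 0 < Bt gamma n).
    { intros n. unfold Bt. rewrite IZR_succ. assert (H1 := pos_INR n). assert (H2 := b_pos gamma Hg n). nra. }
    assert (H0 := HB 0%nat).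
    assert (Bt gamma 0%nat <= Series (Bt gamma)). apply H. intros; left; apply HB. apply ex_Bt; exact Hg.
    lra. }
  assert (Hmpos : 0 < m_mean gamma).
  { unfold m_mean. fold (b gamma).
    assert (H := Series_ge_first (b gamma) (fun n => Rlt_le _ _ (b_pos gamma Hg n)) (ex_b gamma Hg)).
    assert (H0 := b_pos gamma Hg 0). lra. }
  assert (Hah : alpha_hat alpha gamma <> 0).
  { unfold alpha_hat. rewrite HkA. apply Rgt_not_eq. unfold Rdiv.
    apply Rmult_lt_0_compat; [apply Rmult_lt_0_compat; assumption | apply Rinv_0_lt_compat; exact HApos]. }
  apply is_lim_seq_ext with (fun n =>
     Derive Gp 0 * Series (fun k => glue Gm Gp (INR k / INR n) * a gamma k)
     + Derive Gm 0 * - Series (fun k => glue Gm Gp (IZR (- (Z.of_nat k + 1)) / INR n) * a gamma k)).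
  { intros n. f_equal; f_equal.
    - apply Series_ext. intros k. rewrite Ein1. reflexivity.
    - rewrite <- Series_opp. apply Series_ext. intros k. rewrite Ein2. ring. }
  replace (kappa gamma / alpha_hat alpha gamma * Derive Gp 0 ^ 2)
    with (Derive Gp 0 * (Gp 0 * A) + Derive Gm 0 * - (Gm 0 * A)).
  2:{ rewrite HkA. rewrite R1, R2. field. exact Hah. }
  apply is_lim_seq_plus'; apply is_lim_seq_mult'; try apply is_lim_seq_const.
  - exact L1.
  - replace (Finite (- (Gm 0 * A))) with (Rbar_opp (Gm 0 * A)) by reflexivity. exact (proj1 (is_lim_seq_opp _ _) L2).
Qed.
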